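(* Let $X = \{\sum_{k=0}^m d_k 10^{-k} : m \ge 0,\ d_k \in \{0,1,\dots,9\},\ d_0 \neq 0\}$ be the set of terminating decimals in $[1,10)$. Consider the game in which the casino chooses $x \in X$, the player chooses $y \in X$, and the casino wins if the first (leading) decimal digit of $xy$ is $1$, $2$ or $3$, i.e. $xy \in [1,4)\cup[10,40)$. For probability measures $\mu$ (casino) and $\nu$ (player) on the countable set $X$, let $P(\mu,\nu)=\sum_{x,y \in X} \mu\{x\}\nu\{y\}\,\mathbf 1[xy \in [1,4)\cup[10,40)]$. Then $$\sup_\mu \inf_\nu P(\mu,\nu) = \inf_\nu \sup_\mu P(\mu,\nu) = \log_{10} 4.$$ More precisely, for $n\ge1$ let $X_n\subseteq X$ be the terminating decimals in $[1,10)$ with exactly $n$ digits ($m=n-1$) and let $\beta_n$ be the probability measure on $X_n$ with $\beta_n\{x\} = \log_{10}(x + 10^{-(n-1)}) - \log_{10} x$. Then for every $\epsilon>0$ there is $N$ such that for all $n\ge N$: $P(\beta_n,\nu) \ge \log_{10}4 - \epsilon$ for every $\nu$, and $P(\mu,\beta_n) \le \log_{10}4+\epsilon$ for every $\mu$.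
   Context: This is the ''multiplication game'' in which players choose positive integers and the first digit of the product decides the winner; choosing integers is equivalent to choosing elements of $X$ (moving the decimal point does not affect the leading digit of the product). The casino maximizes and the player minimizes the casino's winning probability $P$. *)

(* Defs.v *)
From Stdlib Require Import Reals Lra Lia ClassicalEpsilon.
Open Scope R_scope.

Definition log10 (x : R) : R := ln x / ln 10.

(* X : terminating decimals in [1,10):  x = N / 10^m with 10^m <= N < 10^(m+1),
   i.e. x = sum_{k=0}^m d_k 10^{-k} with d_0 <> 0. *)
Definition inX (x : R) : Prop :=
  exists m N : nat, (10 ^ m <= N < 10 ^ (S m))%nat /\ x = INR N / 10 ^ m.

Definition tsum (f : nat -> R) : R :=
  epsilon (inhabits 0) (fun l => infinite_sum f l).

(* A probability measure on the countable set X, presented as a sequence of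
   atoms pt i ∈ X with weights wt i >= 0 summing to 1:  mu = sum_i wt i δ_{pt i}. *)
Record pmeasure : Type := PMeasure {
  wt : nat -> R;
  pt : nat -> R;
  wt_nonneg : forall i, 0 <= wt i;
  pt_inX : forall i, inX (pt i);
  wt_sum1 : infinite_sum wt 1
}.

Definition win_ind (z : R) : R :=
  if Rle_dec 1 z then (if Rlt_dec z 4 then 1 else
    if Rle_dec 10 z then (if Rlt_dec z 40 then 1 else 0) else 0)
  else 0.

Definition Pw (w : nat -> R) (x : nat -> R) (v : nat -> R) (y : nat -> R) : R :=
  tsum (fun i => w i * tsum (fun j => v j * win_ind (x i * y j))).

Definition P (mu nu : pmeasure) : R := Pw (wt mu) (pt mu) (wt nu) (pt nu).

(* beta_n : atoms of X_n = { N / 10^(n-1) : 10^(n-1) <= N < 10^n }, enumerated as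
   (10^(n-1) + i) / 10^(n-1) for i < 9*10^(n-1); remaining indices carry weight 0. *)
Definition beta_pt (n i : nat) : R :=
  if (i <? 9 * 10 ^ (n - 1))%nat then INR (10 ^ (n - 1) + i) / 10 ^ (n - 1) else 1.

Definition beta_wt (n i : nat) : R :=
  if (i <? 9 * 10 ^ (n - 1))%nat
  then log10 (beta_pt n i + / 10 ^ (n - 1)) - log10 (beta_pt n i)
  else 0.

Definition IsSup (E : R -> Prop) (s : R) : Prop := is_lub E s.
Definition IsInf (E : R -> Prop) (s : R) : Prop := is_lub (fun x => E (- x)) (- s).

(* Main.v *)
Require Import Defs.
From Stdlib Require Import Reals Lra Lia ZArith ClassicalEpsilon.
Open Scope R_scope.

Fixpoint fsum (K : nat) (f : nat -> R) : R :=
  match K with O => 0 | S k => fsum k f + f k end.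

Definition ind (t z : R) : R := if Rlt_dec z t then 1 else 0.

Lemma tsum_eq f l : infinite_sum f l -> tsum f = l.
Proof.
  intro H. unfold tsum. apply (uniqueness_sum f); [|exact H].
  apply epsilon_spec. exists l; exact H.
Qed.

Lemma sum_fsum f n : sum_f_R0 f n = fsum (S n) f.
Proof. induction n; simpl; [ring|]. simpl in IHn. rewrite IHn. ring. Qed.

Lemma fsum_after f M k : (forall i, (M <= i)%nat -> f i = 0) -> (M <= k)%nat ->
  fsum k f = fsum M f.
Proof.
  intros Hf. induction k; intro Hk.
  - replace M with 0%nat by lia. reflexivity.
  - destruct (Nat.eq_dec (S k) M) as [E|E]; [rewrite E; reflexivity|].
    simpl. rewrite IHk by lia. rewrite (Hf k) by lia. ring.
Qed.

Lemma finite_sum f M : (forall i, (M <= i)%nat -> f i = 0) -> infinite_sum f (fsum M f).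
Proof.
  intros Hf eps He. exists M. intros n Hn.
  rewrite sum_fsum, (fsum_after f M (S n)) by (auto; lia).
  unfold Rdist. rewrite Rminus_diag, Rabs_R0. lra.
Qed.

Lemma fsum_ext K f g : (forall i, (i < K)%nat -> f i = g i) -> fsum K f = fsum K g.
Proof.
  induction K; intro H; simpl; [reflexivity|].
  rewrite IHK by (intros; apply H; lia). rewrite H by lia. reflexivity.
Qed.

Lemma fsum_le K f g : (forall i, f i <= g i) -> fsum K f <= fsum K g.
Proof. induction K; intro H; simpl; [lra|]. specialize (IHK H). specialize (H K). lra. Qed.

Lemma fsum_scal K a f : fsum K (fun i => a * f i) = a * fsum K f.
Proof. induction K; simpl; [ring|]. rewrite IHK; ring. Qed.

Lemma fsum_lin4 K a b1 b2 b3 b4 :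
  fsum K (fun i => a i * (b1 i - b2 i + b3 i - b4 i)) =
  fsum K (fun i => a i * b1 i) - fsum K (fun i => a i * b2 i)
  + fsum K (fun i => a i * b3 i) - fsum K (fun i => a i * b4 i).
Proof. induction K; simpl; [ring|]. rewrite IHK; ring. Qed.

Lemma isum_ext f g l : (forall n, f n = g n) -> infinite_sum f l -> infinite_sum g l.
Proof.
  intros E H eps He. destruct (H eps He) as [N HN]. exists N. intros n Hn.
  rewrite <- (sum_eq f g n) by auto. auto.
Qed.

Lemma isum_plus a b la lb : infinite_sum a la -> infinite_sum b lb ->
  infinite_sum (fun n => a n + b n) (la + lb).
Proof.
  intros Ha Hb. pose proof (CV_plus _ _ _ _ Ha Hb) as H.
  intros eps He. destruct (H eps He) as [N HN]. exists N. intros n Hn.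
  rewrite plus_sum. apply HN; auto.
Qed.

Lemma sum_f_R0_scal c a n : sum_f_R0 (fun j => c * a j) n = c * sum_f_R0 a n.
Proof. induction n; simpl; [ring|]. rewrite IHn; ring. Qed.

Lemma isum_scal c a l : infinite_sum a l -> infinite_sum (fun n => c * a n) (c * l).
Proof.
  intros Ha. assert (Hc : Un_cv (fun _ : nat => c) c).
  { intros eps He. exists 0%nat. intros. unfold Rdist. rewrite Rminus_diag, Rabs_R0. lra. }
  pose proof (CV_mult _ _ _ _ Hc Ha) as H.
  intros eps He. destruct (H eps He) as [N HN]. exists N. intros n Hn.
  rewrite sum_f_R0_scal. apply HN; auto.
Qed.

Lemma isum_le a b la lb : (forall n, a n <= b n) -> infinite_sum a la -> infinite_sum b lb -> la <= lb.
Proof.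
  intros H Ha Hb. apply (@Rle_cv_lim (fun n => sum_f_R0 a n) (fun n => sum_f_R0 b n)); auto.
  intro n. apply sum_Rle. auto.
Qed.

Lemma isum_comp a v lv : (forall j, 0 <= a j <= v j) -> infinite_sum v lv ->
  infinite_sum a (tsum a).
Proof.
  intros H Hv. destruct (Rseries_CV_comp a v H (exist _ lv Hv)) as [l Hl].
  rewrite (tsum_eq a l Hl). exact Hl.
Qed.

Lemma isum_swap K c (g : nat -> nat -> R) T :
  (forall i, infinite_sum (g i) (T i)) ->
  infinite_sum (fun j => fsum K (fun i => c i * g i j)) (fsum K (fun i => c i * T i)).
Proof.
  intro H. induction K; simpl.
  - apply (finite_sum (fun _ => 0) 0). auto.
  - apply isum_plus; auto. apply isum_scal; auto.
Qed.

Lemma ln10_gt1 : 1 < ln 10.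
Proof.
  rewrite <- (ln_exp 1) at 1. apply ln_increasing. apply exp_pos.
  pose proof exp_le_3. lra.
Qed.

Lemma log10_le a b : 0 < a -> a <= b -> log10 a <= log10 b.
Proof.
  intros Ha Hab. unfold log10, Rdiv. pose proof ln10_gt1.
  apply Rmult_le_compat_r. left; apply Rinv_0_lt_compat; lra.
  destruct (Req_dec a b); [subst; lra|]. left; apply ln_increasing; lra.
Qed.

Lemma log10_1 : log10 1 = 0.
Proof. unfold log10. rewrite ln_1. unfold Rdiv; ring. Qed.

Lemma log10_10 : log10 10 = 1.
Proof. unfold log10. pose proof ln10_gt1. field. lra. Qed.

Lemma log10_mult a b : 0 < a -> 0 < b -> log10 (a * b) = log10 a + log10 b.
Proof. intros. unfold log10. rewrite ln_mult by auto. unfold Rdiv; ring. Qed.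

Lemma ln_le_m1 x : 0 < x -> ln x <= x - 1.
Proof.
  intro Hx. destruct (Req_dec (ln x) 0) as [E|E].
  - rewrite E. assert (x = 1). { rewrite <- (exp_ln x Hx), E. apply exp_0. } lra.
  - pose proof (exp_ineq1 _ E). rewrite exp_ln in H by auto. lra.
Qed.

Lemma log10_diff a b h : 1 <= a -> a <= b -> b <= a + h -> log10 b <= log10 a + h.
Proof.
  intros H1 H2 H3.
  assert (Eb : b = a * (b / a)) by (field; lra).
  assert (Hq : 1 <= b / a). { apply (Rmult_le_reg_r a); [lra|]. unfold Rdiv. rewrite Rmult_assoc, Rinv_l by lra. lra. }
  rewrite Eb, log10_mult by (try apply Rlt_le_trans with 1; lra).
  assert (log10 (b/a) <= h); [|lra].
  pose proof (ln_le_m1 (b/a) ltac:(lra)).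
  assert (0 <= ln (b/a)). { destruct (Req_dec (b/a) 1) as [E|E]. rewrite E, ln_1; lra.
    rewrite <- ln_1. left. apply ln_increasing; lra. }
  assert (b / a - 1 <= h). { apply (Rmult_le_reg_r a); [lra|].
    replace ((b/a - 1)*a) with (b - a) by (field; lra). nra. }
  unfold log10. pose proof ln10_gt1.
  apply (Rmult_le_reg_r (ln 10)); [lra|]. unfold Rdiv. rewrite Rmult_assoc, Rinv_l by lra. nra.
Qed.

Section Grid.
Variable h : R.
Hypothesis hpos : 0 < h.
Definition xs (i : nat) : R := 1 + INR i * h.

Lemma xs_ge1 i : 1 <= xs i.
Proof. unfold xs. pose proof (pos_INR i). nra. Qed.

Lemma xs_S i : xs (S i) = xs i + h.
Proof. unfold xs. rewrite S_INR. ring. Qed.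

Definition Gs K t := fsum K (fun i => (log10 (xs (S i)) - log10 (xs i)) * ind t (xs i)).

Lemma G_bounds K t :
  log10 (Rmax 1 (Rmin (xs K) t)) <= Gs K t <= log10 (Rmax 1 (Rmin (xs K) (t + h))).
Proof.
  induction K; unfold Gs in *; simpl.
  - unfold xs; simpl. rewrite !Rmult_0_l, !Rplus_0_r.
    rewrite !(Rmax_left 1) by apply Rmin_l. rewrite log10_1; lra.
  - pose proof (xs_ge1 K). pose proof (xs_S K). unfold ind in *; destruct (Rlt_dec (xs K) t).
    + assert (E1 : Rmax 1 (Rmin (xs K) t) = xs K) by (unfold Rmax, Rmin; repeat destruct Rle_dec; lra).
      assert (E2 : Rmax 1 (Rmin (xs K) (t+h)) = xs K) by (unfold Rmax, Rmin; repeat destruct Rle_dec; lra).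
      assert (E3 : Rmax 1 (Rmin (xs (S K)) (t+h)) = xs (S K)) by (unfold Rmax, Rmin; repeat destruct Rle_dec; lra).
      rewrite E1, E2 in IHK. rewrite E3.
      assert (log10 (Rmax 1 (Rmin (xs (S K)) t)) <= log10 (xs (S K))).
      { apply log10_le. unfold Rmax, Rmin; repeat destruct Rle_dec; lra.
        unfold Rmax, Rmin; repeat destruct Rle_dec; lra. }
      lra.
    + assert (E1 : Rmax 1 (Rmin (xs (S K)) t) = Rmax 1 (Rmin (xs K) t)) by (unfold Rmax, Rmin; repeat destruct Rle_dec; lra).
      rewrite E1.
      assert (log10 (Rmax 1 (Rmin (xs K) (t+h))) <= log10 (Rmax 1 (Rmin (xs (S K)) (t+h)))).
      { apply log10_le. unfold Rmax, Rmin; repeat destruct Rle_dec; lra.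
        unfold Rmax, Rmin; repeat destruct Rle_dec; lra. }
      lra.
Qed.

Definition Lc t := log10 (Rmax 1 (Rmin 10 t)).

Lemma G_final K t : xs K = 10 -> Lc t <= Gs K t <= Lc t + h.
Proof.
  intro E. pose proof (G_bounds K t) as H. rewrite E in H. unfold Lc.
  split; [lra|].
  assert (log10 (Rmax 1 (Rmin 10 (t + h))) <= log10 (Rmax 1 (Rmin 10 t)) + h); [|lra].
  apply log10_diff; unfold Rmax, Rmin; repeat destruct Rle_dec; lra.
Qed.

Lemma win_split z : win_ind z = ind 4 z - ind 1 z + ind 40 z - ind 10 z.
Proof. unfold win_ind, ind. repeat destruct Rle_dec; repeat destruct Rlt_dec; lra. Qed.

Lemma ind_div t x c : 0 < c -> ind t (x * c) = ind (t / c) x.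
Proof.
  intro Hc. assert (t / c * c = t) by (field; lra). unfold ind.
  destruct (Rlt_dec (x*c) t); destruct (Rlt_dec x (t/c)); auto; exfalso; nra.
Qed.

Lemma Lsum c : 1 <= c < 10 -> Lc (4/c) - Lc (1/c) + Lc (40/c) - Lc (10/c) = log10 4.
Proof.
  intro Hc. unfold Lc.
  assert (1/c <= 1) by (apply (Rmult_le_reg_r c); [lra|]; unfold Rdiv; rewrite Rmult_assoc, Rinv_l; lra).
  assert (A4: 4/c * c = 4) by (field; lra).
  assert (A10: 10/c * c = 10) by (field; lra).
  assert (A40: 40/c * c = 40) by (field; lra).
  assert (1 < 10 / c) by nra.
  assert (10/c <= 10) by nra.
  rewrite (Rmax_left 1 (Rmin 10 (1/c))) by (unfold Rmin; destruct Rle_dec; lra).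
  rewrite log10_1.
  rewrite (Rmin_right 10 (10/c)) by lra. rewrite (Rmax_right 1 (10/c)) by lra.
  assert (E10 : log10 (10/c) = 1 - log10 c).
  { assert (Hx : log10 10 = log10 (10/c) + log10 c). rewrite <- log10_mult. f_equal. field. lra.
    apply Rdiv_lt_0_compat; lra. lra. rewrite log10_10 in Hx. lra. }
  destruct (Rle_dec c 4).
  - assert (1 <= 4/c) by nra. assert (4/c <= 4) by nra. assert (10 <= 40/c) by nra.
    rewrite (Rmin_right 10 (4/c)) by lra. rewrite (Rmax_right 1 (4/c)) by lra.
    rewrite (Rmin_left 10 (40/c)) by lra. rewrite (Rmax_right 1 10) by lra. rewrite log10_10.
    assert (log10 4 = log10 (4/c) + log10 c). rewrite <- log10_mult. f_equal. field. lra.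
    apply Rdiv_lt_0_compat; lra. lra. lra.
  - assert (4/c < 1) by nra. assert (40/c < 10) by nra. assert (4 < 40/c) by nra.
    rewrite (Rmax_left 1 (Rmin 10 (4/c))) by (unfold Rmin; destruct Rle_dec; lra). rewrite log10_1.
    rewrite (Rmin_right 10 (40/c)) by lra. rewrite (Rmax_right 1 (40/c)) by lra.
    assert (log10 40 = log10 (40/c) + log10 c). rewrite <- log10_mult. f_equal. field. lra.
    apply Rdiv_lt_0_compat; lra. lra.
    assert (Hy : log10 40 = log10 4 + log10 10). rewrite <- log10_mult by lra. f_equal; ring.
    rewrite log10_10 in Hy. lra.
Qed.

Definition Sg K c := fsum K (fun i => (log10 (xs (S i)) - log10 (xs i)) * win_ind (xs i * c)).

Lemma S_bounds K c : xs K = 10 -> 1 <= c < 10 ->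
  log10 4 - 2 * h <= Sg K c <= log10 4 + 2 * h.
Proof.
  intros E Hc. unfold Sg.
  rewrite (fsum_ext K _ (fun i => (log10 (xs (S i)) - log10 (xs i)) *
     (ind (4/c) (xs i) - ind (1/c) (xs i) + ind (40/c) (xs i) - ind (10/c) (xs i)))).
  2:{ intros. rewrite win_split, !ind_div by lra. reflexivity. }
  rewrite fsum_lin4. fold (Gs K (4/c)) (Gs K (1/c)) (Gs K (40/c)) (Gs K (10/c)).
  pose proof (G_final K (4/c) E). pose proof (G_final K (1/c) E).
  pose proof (G_final K (40/c) E). pose proof (G_final K (10/c) E).
  pose proof (Lsum c Hc). lra.
Qed.

End Grid.

Definition pp (n : nat) : R := 10 ^ (n - 1).
Definition hn (n : nat) : R := / pp n.
Definition Mn (n : nat) : nat := (9 * 10 ^ (n - 1))%nat.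

Lemma pp_pos n : 0 < pp n.
Proof. unfold pp. apply pow_lt. lra. Qed.

Lemma hn_pos n : 0 < hn n.
Proof. unfold hn. apply Rinv_0_lt_compat, pp_pos. Qed.

Lemma INR10 : INR 10 = 10.
Proof. simpl. ring. Qed.

Lemma INR_pp n : INR (10 ^ (n - 1)) = pp n.
Proof. rewrite pow_INR, INR10. reflexivity. Qed.

Lemma bpt_in n i : (i < Mn n)%nat -> beta_pt n i = xs (hn n) i.
Proof.
  intro H. unfold beta_pt. destruct (Nat.ltb_spec i (9 * 10 ^ (n - 1))) as [_|C];
  [|unfold Mn in H; lia].
  rewrite plus_INR, INR_pp. fold (pp n). unfold xs, hn. pose proof (pp_pos n). field. lra.
Qed.

Lemma bwt_in n i : (i < Mn n)%nat ->
  beta_wt n i = log10 (xs (hn n) (S i)) - log10 (xs (hn n) i).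
Proof.
  intro H. unfold beta_wt. destruct (Nat.ltb_spec i (9 * 10 ^ (n - 1))) as [_|C];
  [|unfold Mn in H; lia].
  rewrite bpt_in by auto. rewrite xs_S. reflexivity.
Qed.

Lemma bwt_out n i : (Mn n <= i)%nat -> beta_wt n i = 0.
Proof.
  intro H. unfold beta_wt. destruct (Nat.ltb_spec i (9 * 10 ^ (n - 1))) as [C|_];
  [unfold Mn in H; lia|reflexivity].
Qed.

Lemma xs_M n : xs (hn n) (Mn n) = 10.
Proof.
  unfold xs, Mn, hn. rewrite mult_INR, INR_pp. pose proof (pp_pos n).
  replace (INR 9) with 9 by (simpl; ring). field. lra.
Qed.

Lemma telesc h K : fsum K (fun i => log10 (xs h (S i)) - log10 (xs h i)) = log10 (xs h K).
Proof.
  induction K; simpl.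
  - unfold xs. simpl. rewrite Rmult_0_l, Rplus_0_r, log10_1. ring.
  - rewrite IHK. ring.
Qed.

Lemma bw_fsum n : fsum (Mn n) (beta_wt n) = 1.
Proof.
  rewrite (fsum_ext _ _ (fun i => log10 (xs (hn n) (S i)) - log10 (xs (hn n) i)))
    by (intros; apply bwt_in; auto).
  rewrite telesc, xs_M. apply log10_10.
Qed.

Lemma bw_nonneg n i : 0 <= beta_wt n i.
Proof.
  destruct (le_lt_dec (Mn n) i).
  - rewrite bwt_out by auto. lra.
  - rewrite bwt_in by auto. pose proof (hn_pos n).
    pose proof (xs_ge1 (hn n) H i). pose proof (xs_S (hn n) i).
    assert (log10 (xs (hn n) i) <= log10 (xs (hn n) (S i))) by (apply log10_le; lra). lra.
Qed.

Lemma bw_sum n : infinite_sum (beta_wt n) 1.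
Proof. rewrite <- (bw_fsum n). apply finite_sum. apply bwt_out. Qed.

Lemma bpt_inX n i : inX (beta_pt n i).
Proof.
  unfold beta_pt. destruct (Nat.ltb_spec i (9 * 10 ^ (n - 1))).
  - exists (n - 1)%nat, (10 ^ (n - 1) + i)%nat. split; [|reflexivity].
    rewrite Nat.pow_succ_r'. lia.
  - exists 0%nat, 1%nat. split; [simpl; lia|]. simpl. field.
Qed.

Definition betaM (n : nat) : pmeasure :=
  PMeasure (beta_wt n) (beta_pt n) (bw_nonneg n) (bpt_inX n) (bw_sum n).

Lemma inX_bounds x : inX x -> 1 <= x < 10.
Proof.
  intros [m [N [[H1 H2] E]]]. subst x.
  apply le_INR in H1. apply lt_INR in H2.
  rewrite !pow_INR, INR10 in *. simpl in H2.
  pose proof (pow_lt 10 m ltac:(lra)).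
  assert (INR N / 10 ^ m * 10 ^ m = INR N) by (field; lra).
  split; nra.
Qed.

Lemma win_bounds z : 0 <= win_ind z <= 1.
Proof. unfold win_ind. repeat destruct Rle_dec; repeat destruct Rlt_dec; lra. Qed.

Lemma S_beta n c : 1 <= c < 10 ->
  log10 4 - 2 * hn n <= fsum (Mn n) (fun i => beta_wt n i * win_ind (beta_pt n i * c))
  <= log10 4 + 2 * hn n.
Proof.
  intro Hc. rewrite (fsum_ext _ _ (fun i => (log10 (xs (hn n) (S i)) - log10 (xs (hn n) i)) * win_ind (xs (hn n) i * c))).
  - apply (S_bounds (hn n) (hn_pos n)); auto. apply xs_M.
  - intros. rewrite bwt_in, bpt_in; auto.
Qed.

Lemma part3a n nu : log10 4 - 2 * hn n <= Pw (beta_wt n) (beta_pt n) (wt nu) (pt nu).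
Proof.
  unfold Pw. set (v := wt nu). set (y := pt nu).
  set (T := fun i => tsum (fun j => v j * win_ind (beta_pt n i * y j))).
  assert (HT : forall i, infinite_sum (fun j => v j * win_ind (beta_pt n i * y j)) (T i)).
  { intro i. apply (isum_comp _ v 1); [|apply (wt_sum1 nu)].
    intro j. pose proof (win_bounds (beta_pt n i * y j)). pose proof (wt_nonneg nu j). fold v in H0. nra. }
  rewrite (tsum_eq _ (fsum (Mn n) (fun i => beta_wt n i * T i))).
  2:{ apply finite_sum. intros. rewrite bwt_out by auto. ring. }
  pose proof (isum_swap (Mn n) (beta_wt n) (fun i j => v j * win_ind (beta_pt n i * y j)) T HT) as Hs.
  pose proof (isum_scal (log10 4 - 2 * hn n) v 1 (wt_sum1 nu)) as Hc.
  rewrite Rmult_1_r in Hc.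
  refine (isum_le _ _ _ _ _ Hc Hs). intro j. simpl.
  rewrite (fsum_ext _ _ (fun i => v j * (beta_wt n i * win_ind (beta_pt n i * y j)))) by (intros; ring).
  rewrite fsum_scal.
  pose proof (S_beta n (y j) (inX_bounds _ (pt_inX nu j))).
  pose proof (wt_nonneg nu j). fold v in H0. nra.
Qed.

Lemma fsum_nonneg K f : (forall i, 0 <= f i) -> 0 <= fsum K f.
Proof. induction K; intro H; simpl; [lra|]. specialize (IHK H). specialize (H K). lra. Qed.

Lemma part3b n mu : Pw (wt mu) (pt mu) (beta_wt n) (beta_pt n) <= log10 4 + 2 * hn n.
Proof.
  unfold Pw. set (w := wt mu). set (x := pt mu).
  assert (HU : forall i, tsum (fun j => beta_wt n j * win_ind (x i * beta_pt n j)) =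
     fsum (Mn n) (fun j => beta_wt n j * win_ind (beta_pt n j * x i))).
  { intro i. apply tsum_eq.
    rewrite (fsum_ext _ _ (fun j => beta_wt n j * win_ind (x i * beta_pt n j)))
      by (intros; rewrite Rmult_comm with (r1 := beta_pt n i0); reflexivity).
    apply finite_sum. intros. rewrite bwt_out by auto. ring. }
  assert (HB : forall i, 0 <= fsum (Mn n) (fun j => beta_wt n j * win_ind (beta_pt n j * x i)) <= 1
     /\ fsum (Mn n) (fun j => beta_wt n j * win_ind (beta_pt n j * x i)) <= log10 4 + 2 * hn n).
  { intro i. split; [split|].
    - apply fsum_nonneg. intro j. pose proof (bw_nonneg n j). pose proof (win_bounds (beta_pt n j * x i)). nra.
    - rewrite <- (bw_fsum n). apply fsum_le. intro j.
      pose proof (bw_nonneg n j). pose proof (win_bounds (beta_pt n j * x i)). nra.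
    - apply S_beta. apply inX_bounds, (pt_inX mu). }
  set (f := fun i => w i * tsum (fun j => beta_wt n j * win_ind (x i * beta_pt n j))).
  assert (Hf : infinite_sum f (tsum f)).
  { apply (isum_comp f w 1); [|apply (wt_sum1 mu)]. intro i. unfold f. rewrite HU.
    destruct (HB i) as [Hb _]. pose proof (wt_nonneg mu i). fold w in H. nra. }
  pose proof (isum_scal (log10 4 + 2 * hn n) w 1 (wt_sum1 mu)) as Hc.
  rewrite Rmult_1_r in Hc.
  refine (isum_le _ _ _ _ _ Hf Hc). intro i. unfold f. rewrite HU.
  destruct (HB i) as [_ Hb]. pose proof (wt_nonneg mu i). fold w in H. nra.
Qed.

Lemma pow10_ge m : INR m + 1 <= 10 ^ m.
Proof. induction m; [simpl; lra|]. rewrite S_INR. simpl pow. pose proof (pos_INR m). lra. Qed.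

Lemma choose_N eps : eps > 0 -> exists N : nat, forall n, (N <= n)%nat -> 2 * hn n <= eps.
Proof.
  intro He. destruct (archimed (2 / eps)) as [H1 _].
  assert (Hp : 0 < 2 / eps) by (apply Rdiv_lt_0_compat; lra).
  assert (Hz : (0 <= up (2/eps))%Z) by (apply le_IZR; lra).
  exists (S (Z.to_nat (up (2 / eps)))). intros n Hn.
  assert (INR (Z.to_nat (up (2/eps))) = IZR (up (2/eps))) by (rewrite INR_IZR_INZ, Z2Nat.id; auto).
  assert (Hk : (Z.to_nat (up (2/eps)) <= n - 1)%nat) by lia.
  apply le_INR in Hk. pose proof (pow10_ge (n - 1)).
  assert (2 / eps < pp n) by (unfold pp; lra).
  unfold hn. assert (2 <= eps * pp n).
  { apply (Rmult_lt_compat_l eps) in H2; [|lra]. replace (eps * (2/eps)) with 2 in H2 by (field; lra). lra. }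
  pose proof (pp_pos n).
  apply (Rmult_le_reg_r (pp n)); auto. rewrite Rmult_assoc, Rinv_l by lra. lra.
Qed.

Lemma part3 eps : eps > 0 -> exists N : nat, forall n : nat, (1 <= n)%nat -> (N <= n)%nat ->
        (forall nu : pmeasure,
            Pw (beta_wt n) (beta_pt n) (wt nu) (pt nu) >= log10 4 - eps)
        /\ (forall mu : pmeasure,
            Pw (wt mu) (pt mu) (beta_wt n) (beta_pt n) <= log10 4 + eps).
Proof.
  intro He. destruct (choose_N eps He) as [N HN]. exists N. intros n _ Hn.
  specialize (HN n Hn). split.
  - intro nu. pose proof (part3a n nu). lra.
  - intro mu. pose proof (part3b n mu). lra.
Qed.

Lemma eps_le a b : (forall eps, eps > 0 -> a <= b + eps) -> a <= b.
Proof.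
  intro H. destruct (Rle_dec a b) as [|C]; auto. specialize (H ((a - b)/2)). lra.
Qed.

Theorem mainTheorem2 :
  IsSup (fun a => exists mu : pmeasure,
            IsInf (fun p => exists nu : pmeasure, p = P mu nu) a) (log10 4)
  /\ IsInf (fun a => exists nu : pmeasure,
            IsSup (fun p => exists mu : pmeasure, p = P mu nu) a) (log10 4)
  /\ (forall eps : R, eps > 0 -> exists N : nat, forall n : nat, (1 <= n)%nat -> (N <= n)%nat ->
        (forall nu : pmeasure,
            Pw (beta_wt n) (beta_pt n) (wt nu) (pt nu) >= log10 4 - eps)
        /\ (forall mu : pmeasure,
            Pw (wt mu) (pt mu) (beta_wt n) (beta_pt n) <= log10 4 + eps)).
Proof.
  split; [|split; [|exact part3]].
  - split.
    + intros a [mu [Hub _]]. apply eps_le. intros eps He.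
      destruct (choose_N eps He) as [N HN].
      pose proof (part3b N mu). specialize (HN N (le_n N)).
      assert (- P mu (betaM N) <= - a).
      { apply Hub. exists (betaM N). ring. }
      unfold P in H0. simpl in H0. lra.
    + intros b Hb. apply eps_le. intros eps He.
      destruct (choose_N eps He) as [N HN]. specialize (HN N (le_n N)).
      set (F := fun x => exists nu, - x = P (betaM N) nu).
      assert (HFb : is_upper_bound F (- (log10 4 - 2 * hn N))).
      { intros x [nu Hx]. pose proof (part3a N nu). unfold P in Hx. simpl in Hx. lra. }
      destruct (completeness F) as [s Hs].
      { exists (- (log10 4 - 2 * hn N)). exact HFb. }
      { exists (- P (betaM N) (betaM N)). exists (betaM N). ring. }
      assert (Hin : IsInf (fun p => exists nu, p = P (betaM N) nu) (- s)).
      { unfold IsInf. rewrite Ropp_involutive. exact Hs. }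
      assert (- s <= b) by (apply Hb; exists (betaM N); exact Hin).
      destruct Hs as [_ Hl]. specialize (Hl _ HFb). lra.
  - split.
    + intros x [nu [Hub _]]. apply Ropp_le_cancel. rewrite Ropp_involutive.
      apply eps_le. intros eps He.
      destruct (choose_N eps He) as [N HN]. specialize (HN N (le_n N)).
      pose proof (part3a N nu).
      assert (P (betaM N) nu <= - x) by (apply Hub; exists (betaM N); reflexivity).
      unfold P in H0. simpl in H0. lra.
    + intros b Hb. apply Ropp_le_cancel. rewrite Ropp_involutive.
      apply eps_le. intros eps He.
      destruct (choose_N eps He) as [N HN]. specialize (HN N (le_n N)).
      set (F := fun p => exists mu, p = P mu (betaM N)).
      assert (HFb : is_upper_bound F (log10 4 + 2 * hn N)).
      { intros p [mu Hp]. pose proof (part3b N mu). unfold P in Hp. simpl in Hp. lra. }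
      destruct (completeness F) as [s Hs].
      { exists (log10 4 + 2 * hn N). exact HFb. }
      { exists (P (betaM N) (betaM N)). exists (betaM N). reflexivity. }
      assert (- s <= b).
      { apply Hb. exists (betaM N). rewrite Ropp_involutive. exact Hs. }
      destruct Hs as [_ Hl]. specialize (Hl _ HFb). lra.
Qed.
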